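(* Let $\alpha>0$ and let $f$ be an entire function with $f\in\bigcup_{p\ge 1}F^p_\alpha$. Then $$\lim_{p\to+\infty}\|f\|_{p,\alpha}=\|f\|_{\infty,\alpha}.$$
   Context: For $\alpha>0$ and $0<p<\infty$, $F^p_\alpha$ is the space of entire functions $f$ on $\mathbb{C}$ with $\|f\|_{p,\alpha}=\left[\frac{p\alpha}{2\pi}\int_{\mathbb{C}}|f(z)e^{-\alpha|z|^2/2}|^p\,dA(z)\right]^{1/p}<\infty$, where $dA$ is area measure. $F^\infty_\alpha$ is the space of entire $f$ with $\|f\|_{\infty,\alpha}=\operatorname{ess\,sup}_{z\in\mathbb{C}}|f(z)|e^{-\alpha|z|^2/2}<\infty$. *)

(* Defs.v *)
From HB Require Import structures.
From mathcomp Require Import all_boot all_order all_algebra.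
From mathcomp Require Import all_classical all_reals all_analysis.
From mathcomp Require Import complex ess_sup_inf.
Set Implicit Arguments. Unset Strict Implicit. Unset Printing Implicit Defensive.
Import Order.TTheory GRing.Theory Num.Theory ComplexField.
Import numFieldNormedType.Exports.
Local Open Scope classical_set_scope.
Local Open Scope ring_scope.

(* area measure on C, identified with R x R via (x, y) |-> x + i y *)
Definition area (R : realType) :=
  ((@lebesgue_measure R) \x (@lebesgue_measure R))%E.

Definition entire (R : realType) (f : R[i] -> R[i]) : Prop :=
  forall z : R[i], derivable (f : R[i]^o -> R[i]^o) z 1.

Definition fock_weighted (R : realType) (alpha : R) (f : R[i] -> R[i])
  (z : R * R) : R :=
  Normc.normc (f (Complex z.1 z.2)) * expR (- (alpha * (z.1 ^+ 2 + z.2 ^+ 2)) / 2).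

Definition fock_norm (R : realType) (p alpha : R) (f : R[i] -> R[i]) : \bar R :=
  (((p * alpha / (2 * pi))%:E *
     \int[@area R]_(z in setT) ((fock_weighted alpha f z) `^ p)%:E) `^ p^-1)%E.

Definition fock_norm_infty (R : realType) (alpha : R) (f : R[i] -> R[i]) : \bar R :=
  ess_sup (@area R) (fun z => (fock_weighted alpha f z)%:E).

(* Main.v *)
Require Import Defs.
From HB Require Import structures.
From mathcomp Require Import all_boot all_order all_algebra.
From mathcomp Require Import all_classical all_reals all_analysis.
From mathcomp Require Import complex ess_sup_inf measurable_realfun.
Set Implicit Arguments. Unset Strict Implicit. Unset Printing Implicit Defensive.
Import Order.TTheory GRing.Theory Num.Theory ComplexField.
Import numFieldNormedType.Exports.
Local Open Scope classical_set_scope.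
Local Open Scope ring_scope.
From mathcomp Require Import lra ring.

Lemma normc_le (R : realType) (a b : R) : Normc.normc (Complex a b) <= `|a| + `|b|.
Proof.
have -> : Complex a b = Complex a 0 + Complex 0 b by congr Complex; rewrite ?addr0 ?add0r.
apply: le_trans (le_normcD _ _) _.
by rewrite /= !expr0n /= addr0 add0r !sqrtr_sqr.
Qed.

Lemma normc_lt (R : realType) (z : R[i]) (e : R) : `|z| < (e%:C)%C -> Normc.normc z < e.
Proof. by rewrite normc_def ltcR; case: z. Qed.

Lemma normc_lt' (R : realType) (z : R[i]) (e : R[i]) : 0 < e -> Normc.normc z < complex.Re e -> `|z| < e.
Proof.
case: e => a b; rewrite ltcE /= => /andP[/eqP -> _].
rewrite normc_def; case: z => x y /= h. by rewrite ltcE /= eqxx h.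
Qed.

Lemma normc_ge0' (R : realType) (z : R[i]) : 0 <= Normc.normc z.
Proof. by case: z => a b /=; exact: sqrtr_ge0. Qed.

Lemma cont_normf (R : realType) (f : R[i] -> R[i]) : entire f ->
  continuous (fun z : R * R => Normc.normc (f (Complex z.1 z.2))).
Proof.
move=> ef [x1 x2].
have cf : {for Complex x1 x2, continuous (f : R[i]^o -> R[i]^o)}.
  apply: differentiable_continuous; apply/derivable1_diffP; exact: ef.
apply/cvgrPdist_lt => e e0.
move/cvgrPdist_lt: cf => /(_ (e%:C)%C); rewrite ltcR => /(_ e0).
move=> /nbhs_ballP [d /= d0 dP].
have dd : 0 < complex.Re d / 2.
  by move: d0; case: d {dP} => a b; rewrite ltcE /= => /andP[_ ?]; lra.
exists (ball x1 (complex.Re d / 2), ball x2 (complex.Re d / 2)).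
  by split; apply: nbhsx_ballx.
move=> [y1 y2] [/= b1 b2].
have := dP (Complex y1 y2).
rewrite /ball /=.
have H : `|Complex x1 x2 - Complex y1 y2| < d.
  apply: normc_lt' => //.
  apply: le_lt_trans (normc_le _ _) _.
  move: b1 b2; rewrite /ball /= => b1 b2; lra.
move=> /(_ H) /normc_lt.
set u := f _; set v := f _ => h.
have t1 := le_normcD (u - v) v; have t2 := le_normcD (v - u) u.
rewrite subrK in t1; rewrite subrK in t2.
have : Normc.normc (v - u) = Normc.normc (u - v) by rewrite -normcN opprB.
move=> E; rewrite E in t2.
rewrite ltr_distl; apply/andP; split; lra.
Qed.
Lemma cont_w (R : realType) (alpha : R) (f : R[i] -> R[i]) : entire f ->
  continuous (fock_weighted alpha f).
Proof.
move=> ef z; apply: cvgM; first exact: cont_normf.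
apply: continuous_comp; last exact: continuous_expR.
apply: cvgMl; apply: cvgN; apply: cvgMr.
apply: cvgD; rewrite -?expr2; apply: cvgM; [exact: cvg_fst|exact: cvg_fst|exact: cvg_snd|exact: cvg_snd].
Qed.
Lemma open_prod_measurable (R : realType) (U : set (R * R)) : open U -> measurable U.
Proof.
move=> oU.
pose box (q : rat * rat * rat) : set (R * R) :=
  `](ratr q.1.1 - ratr q.2), (ratr q.1.1 + ratr q.2)[ `*`
  `](ratr q.1.2 - ratr q.2), (ratr q.1.2 + ratr q.2)[.
pose F q := if pselect (box q `<=` U) is left _ then box q else set0.
have -> : U = \bigcup_q F q.
  apply/seteqP; split => [x Ux|x [q _]]; last first.
    by rewrite /F; case: pselect => // H; exact: H.
  rewrite openE in oU; have := oU x Ux.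
  move=> /nbhs_ballP[e /= e0 xeU].
  have [r] : exists r : rat, ratr r \in `]0, e / 2[.
    by apply: rat_in_itvoo; lra.
  rewrite in_itv /= => /andP[r0 re].
  have [q1] := @rat_in_itvoo R (x.1 - ratr r) (x.1 + ratr r) ltac:(lra).
  have [q2] := @rat_in_itvoo R (x.2 - ratr r) (x.2 + ratr r) ltac:(lra).
  rewrite !in_itv /= => /andP[h1 h2] /andP[h3 h4].
  have bU : box (q1, q2, r) `<=` U.
    move=> y [] /=; rewrite !in_itv /= => /andP[y1 y2] /andP[y3 y4].
    apply: xeU; split => /=; rewrite /ball /= ltr_distl; apply/andP; split; lra.
  exists (q1, q2, r) => //; rewrite /F; case: pselect => // _.
  by split => /=; rewrite in_itv /=; apply/andP; split; lra.
apply: countable_bigcupT_measurable; first exact: countableP.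
by move=> q; rewrite /F; case: pselect => _ //; apply: measurableX; exact: measurable_itv.
Qed.

Lemma cont_prod_measurable (R : realType) (g : R * R -> R) : continuous g -> measurable_fun setT g.
Proof.
move=> /continuousP cg.
apply: (measurability _ (RGenOpens.measurableE R)).
move=> _ [_ [a [b ->]] <-]; apply: measurableI => //.
apply: open_prod_measurable; apply: cg; exact: interval_open.
Qed.

Lemma w_ge0 (R : realType) (alpha : R) f z : 0 <= fock_weighted alpha f z.
Proof. by rewrite /fock_weighted mulr_ge0 ?normc_ge0' ?expR_ge0. Qed.

Lemma w_meas (R : realType) (alpha : R) f : entire f ->
  measurable_fun setT (fock_weighted alpha f).
Proof. by move=> ef; apply: cont_prod_measurable; exact: cont_w. Qed.

Lemma wp_meas (R : realType) (alpha : R) f p : entire f ->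
  measurable_fun setT (fun z => ((fock_weighted alpha f z) `^ p)%:E).
Proof.
move=> ef; apply/measurable_EFinP.
exact: (measurableT_comp (measurable_powR p) (w_meas alpha ef)).
Qed.

Lemma area_gt0 (R : realType) : (0 < @area R setT)%E.
Proof.
apply: (@lt_le_trans _ _ (@area R (`[0%R, 1%R] `*` `[0%R, 1%R]))).
  rewrite /area product_measure1E //= lebesgue_measure_itv /=.
  by rewrite lte_fin ltr01 oppr0 adde0 mule1 lte01.
by apply: le_measure; rewrite ?inE //; apply: measurableX.
Qed.

Lemma lower (R : realType) (alpha : R) f (M : R) : 0 < alpha -> entire f ->
  (M%:E < fock_norm_infty alpha f)%E ->
  \forall p \near +oo, (M%:E <= fock_norm p alpha f)%E.
Proof.
move=> a0 ef MS.
have [M0|M0] := leP M 0.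
  by apply: nearW => p; apply: le_trans (poweR_ge0 _ _); rewrite lee_fin.
set w := fock_weighted alpha f.
pose A := [set z | M < w z].
have mA : measurable A.
  have := w_meas alpha ef measurableT (measurable_itv `]M, +oo[).
  rewrite setTI; congr measurable; apply/seteqP; split => z /=;
    by rewrite in_itv /= andbT.
have Apos : (0 < @area R A)%E.
  rewrite lt0e measure_ge0 andbT; apply/negP => /eqP A0.
  move: MS; apply/negP; rewrite -leNgt; apply/ess_supP.
  exists A; split => // z /=; rewrite lee_fin => /negP; rewrite -ltNge.
  done.
have [m m0 mA'] : exists2 m : R, 0 < m & (m%:E <= @area R A)%E.
  move: Apos; case: (@area R A) => [r||] //.
  - by move=> r0; exists r.
  - by move=> _; exists 1 => //; rewrite leey.
near=> p.
have p1 : 1 <= p by near: p; apply: nbhs_pinfty_ge; rewrite num_real.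
have p2 : 2 * pi / (alpha * m) <= p.
  by near: p; apply: nbhs_pinfty_ge; rewrite num_real.
have p0 : 0 < p by apply: lt_le_trans ltr01 p1.
set c := p * alpha / (2 * pi).
have pi0 : 0 < 2 * (pi : R) by apply: mulr_gt0 => //; exact: pi_gt0.
have c0 : 0 < c by apply: divr_gt0 => //; exact: mulr_gt0.
have cm1 : 1 <= c * m.
  move: p2; rewrite ler_pdivrMr; last exact: mulr_gt0.
  move=> p2.
  by rewrite /c mulrAC ler_pdivlMr // mul1r -mulrA.
have I1 : ((M `^ p * m)%:E <= \int[@area R]_(z in setT) ((w z) `^ p)%:E)%E.
  have H := ge0_subset_integral (@area R) mA measurableT (wp_meas alpha p ef)
    (fun z _ => powR_ge0 (w z) p) (@subsetT _ A).
  apply: le_trans _ H.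
  have H2 : (\int[@area R]_(z in A) (cst (M `^ p)%:E) z <=
     \int[@area R]_(z in A) ((w z) `^ p)%:E)%E.
    apply: ge0_le_integral => //.
    - by move=> z _; rewrite lee_fin powR_ge0.
    - exact: measurable_funS (wp_meas alpha p ef).
    - move=> z Az; rewrite lee_fin; apply: ge0_ler_powR => //;
        rewrite ?nnegrE ?w_ge0 ?ltW //.
  apply: le_trans _ H2.
  by rewrite integral_cst // EFinM; apply: lee_wpmul2l => //; rewrite lee_fin powR_ge0.
have I2 : (((c * m) * M `^ p)%:E <= c%:E * \int[@area R]_(z in setT) ((w z) `^ p)%:E)%E.
  rewrite -mulrA [m * _]mulrC EFinM.
  by apply: lee_wpmul2l => //; rewrite lee_fin ltW.
rewrite /fock_norm -/w -/c.
have pi1 : 0 <= p^-1 by rewrite invr_ge0 ltW.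
apply: le_trans _ (gt0_ler_poweR pi1 _ _ I2); last 2 first.
- by rewrite in_itv /= leey andbT lee_fin mulr_ge0 ?powR_ge0 // mulr_ge0 // ltW.
- rewrite in_itv /= leey andbT; apply: mule_ge0; first by rewrite lee_fin ltW.
  by apply: integral_ge0 => z _; rewrite lee_fin powR_ge0.
have cm0 : 0 <= c * m by apply: mulr_ge0; apply: ltW.
rewrite poweR_EFin lee_fin powRM ?powR_ge0 //.
rewrite -powRrM mulfV ?gt_eqF // powRr1; last exact: ltW.
have h1 : 1 <= (c * m) `^ p^-1.
  have : (1 : R) `^ p^-1 <= (c * m) `^ p^-1 by apply: ge0_ler_powR; rewrite ?nnegrE.
  by rewrite powR1.
have := ler_wpM2r (ltW M0) h1; by rewrite mul1r.
Unshelve. all: by end_near.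
Qed.

Lemma pow_split (R : realType) (x u p p0 : R) : 0 <= x -> x <= u -> 0 < p0 ->
  p0 <= p -> x `^ p <= u `^ (p - p0) * x `^ p0.
Proof.
move=> x0 xu p00 pp.
have [->|xn0] := eqVneq x 0.
  rewrite powR0; last by rewrite gt_eqF // (lt_le_trans p00 pp).
  by rewrite mulr_ge0 ?powR_ge0.
have -> : x `^ p = x `^ (p - p0) * x `^ p0.
  by rewrite -powRD ?subrK // xn0 implybT.
apply: ler_wpM2r; first exact: powR_ge0.
by apply: ge0_ler_powR; rewrite ?nnegrE ?subr_ge0 // (le_trans x0 xu).
Qed.

Lemma exp_sq (R : realType) (q : R) : 0 <= q -> q ^+ 2 <= expR (2 * q).
Proof.
move=> q0; rewrite mulr2n mulrDl mul1r expRD -expr2.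
have h : q <= expR q by apply: le_trans (expR_ge1Dx q); rewrite lerDr.
by rewrite ler_pXn2r ?nnegrE ?expR_ge0.
Qed.

Lemma upper (R : realType) (alpha : R) f (p0 t : R) : 0 < alpha -> entire f ->
  1 <= p0 -> (fock_norm p0 alpha f < +oo)%E ->
  (fock_norm_infty alpha f < t%:E)%E ->
  \forall p \near +oo, (fock_norm p alpha f <= t%:E)%E.
Proof.
move=> a0 ef p01 Np0 St.
set w := fock_weighted alpha f.
set S := fock_norm_infty alpha f.
have S0 : (0 <= S)%E.
  apply: ess_sup_gee; first exact: area_gt0.
  by apply: nearW => z; rewrite lee_fin w_ge0.
have Sfin : S \is a fin_num by rewrite ge0_fin_numE // (lt_trans St) ?ltry.
set s := fine S.
have s0 : 0 <= s by rewrite fine_ge0.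
have st : s < t by rewrite -lte_fin /s fineK.
pose u := (s + t) / 2.
have u0 : 0 < u by rewrite /u; lra.
have ut : u < t by rewrite /u; lra.
have su : s <= u by rewrite /u; lra.
have aeu : \forall z \ae @area R, w z <= u.
  apply: filterS (ess_sup_ge (@area R) (fun z => (w z)%:E)).
  move=> z /= h; rewrite -lee_fin; apply: le_trans h _.
  by change (S <= u%:E)%E; rewrite -(fineK Sfin) lee_fin.
pose I p := (\int[@area R]_(z in setT) ((w z) `^ p)%:E)%E.
have I0 : forall p, (0 <= I p)%E.
  by move=> p; apply: integral_ge0 => z _; rewrite lee_fin powR_ge0.
have pi0 : 0 < 2 * (pi : R) by apply: mulr_gt0 => //; exact: pi_gt0.
have p00 : 0 < p0 by apply: lt_le_trans ltr01 p01.
have Ip0 : (I p0 < +oo)%E.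
  rewrite ltNge leye_eq; apply/negP => /eqP Iy.
  move: Np0; rewrite /fock_norm -/w -/(I p0) Iy gt0_muley; last first.
    by rewrite lte_fin; apply: divr_gt0 => //; exact: mulr_gt0.
  by rewrite poweRyr ?ltxx // invr_neq0 // gt_eqF.
set K := fine (I p0).
have K0 : 0 <= K by rewrite fine_ge0.
have IK : I p0 = K%:E by rewrite /K fineK // ge0_fin_numE.
set r := t / u.
have r1 : 1 < r by rewrite /r ltr_pdivlMr // mul1r.
set L := ln r.
have L0 : 0 < L by exact: ln_gt0.
set U := u `^ p0.
have U0 : 0 < U by rewrite /U powR_gt0.
set B := alpha / (2 * pi) * K.
near=> p.
have pp0 : p0 + 1 <= p by near: p; apply: nbhs_pinfty_ge; rewrite num_real.
have pB : 4 * B / (U * L ^+ 2) <= p.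
  by near: p; apply: nbhs_pinfty_ge; rewrite num_real.
have p0p : p0 <= p by lra.
have p0' : 0 < p by lra.
set c := p * alpha / (2 * pi).
have c0 : 0 < c by apply: divr_gt0 => //; exact: mulr_gt0.
have Ip : (I p <= (u `^ (p - p0) * K)%:E)%E.
  have H : (I p <= \int[@area R]_(z in setT) ((u `^ (p - p0))%:E * ((w z) `^ p0)%:E))%E.
    apply: ae_ge0_le_integral => //.
    - by move=> z _; rewrite lee_fin powR_ge0.
    - exact: wp_meas.
    - by move=> z _; rewrite mule_ge0 // lee_fin powR_ge0.
    - by apply: measurable_funeM; exact: wp_meas.
    - case: aeu => N [mN N0 HN]; exists N; split => // z /= hz; apply: HN => /= wz.
      apply: hz => _; rewrite -EFinM lee_fin.
      by apply: pow_split => //; exact: w_ge0.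
  apply: le_trans H _.
  rewrite ge0_integralZl_EFin //; last exact: powR_ge0.
  - by rewrite -/(I p0) IK -EFinM.
  - by move=> z _; rewrite lee_fin powR_ge0.
  - exact: wp_meas.
have key : c * (u `^ (p - p0) * K) <= t `^ p.
  have -> : c * (u `^ (p - p0) * K) = u `^ (p - p0) * (p * B).
    by rewrite /c /B; ring.
  have -> : t `^ p = u `^ (p - p0) * (U * r `^ p).
    rewrite /U /r mulrA -powRD; last by apply/implyP => _; rewrite gt_eqF.
    rewrite subrK -powRM; [|exact: ltW|apply: divr_ge0; apply: ltW => //; exact: lt_trans u0 ut].
    by rewrite mulrC divfK // gt_eqF.
  apply: ler_wpM2l; first exact: powR_ge0.
  have hr : (p * L / 2) ^+ 2 <= r `^ p.
    rewrite /powR gt_eqF ?(lt_trans ltr01 r1) //.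
    have hq : 0 <= p * L / 2 by apply: divr_ge0 => //; apply: mulr_ge0; exact: ltW.
    have := exp_sq hq.
    have -> : 2 * (p * L / 2) = p * L by field.
    by [].
  apply: le_trans (ler_wpM2l (ltW U0) hr).
  have hp : 4 * B <= p * (U * L ^+ 2).
    by move: pB; rewrite ler_pdivrMr // mulr_gt0 // exprn_gt0.
  have -> : U * (p * L / 2) ^+ 2 = p * (p * (U * L ^+ 2)) / 4 by field.
  rewrite ler_pdivlMr // -mulrA ler_wpM2l // ?(ltW p0') //.
  by rewrite mulrC.
rewrite /fock_norm -/w -/c -/(I p).
have pi1 : 0 <= p^-1 by rewrite invr_ge0 ltW.
have I2 : (c%:E * I p <= (c * (u `^ (p - p0) * K))%:E)%E.
  rewrite [X in (_ <= X)%E]EFinM; apply: lee_wpmul2l; [by rewrite lee_fin ltW|exact: Ip].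
apply: le_trans (gt0_ler_poweR pi1 _ _ I2) _.
- rewrite in_itv /= leey andbT; apply: mule_ge0 => //; by rewrite lee_fin ltW.
- rewrite in_itv /= leey andbT lee_fin; apply: mulr_ge0; first exact: ltW.
  by apply: mulr_ge0 => //; exact: powR_ge0.
rewrite poweR_EFin lee_fin.
have -> : t = (t `^ p) `^ p^-1.
  by rewrite -powRrM mulfV ?gt_eqF // powRr1 // ltW // (lt_trans u0 ut).
apply: ge0_ler_powR => //; rewrite nnegrE; last exact: powR_ge0.
apply: mulr_ge0; first exact: ltW.
by apply: mulr_ge0 => //; exact: powR_ge0.
Unshelve. all: by end_near.
Qed.

Unset Implicit Arguments.
Set Strict Implicit.

Theorem lemma2p4 (R : realType) (alpha : R) (f : R[i] -> R[i]) :
  0 < alpha -> entire f ->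
  (exists p : R, 1 <= p /\ (fock_norm p alpha f < +oo)%E) ->
  fock_norm p alpha f @[p --> +oo] --> fock_norm_infty alpha f.
Proof.
move=> a0 ef [p0 [p01 Np0]].
have S0 : (0 <= fock_norm_infty alpha f)%E.
  apply: ess_sup_gee; first exact: area_gt0.
  by apply: nearW => z; rewrite lee_fin w_ge0.
have N0 : forall p, (0 <= fock_norm p alpha f)%E by move=> p; exact: poweR_ge0.
case E: (fock_norm_infty alpha f) => [s||]; last by rewrite E in S0.
- have s0 : 0 <= s by rewrite -lee_fin -E.
  apply/fine_cvgP; split.
    have St : (fock_norm_infty alpha f < (s + 1)%:E)%E.
      by rewrite E lte_fin ltrDl ltr01.
    have := upper a0 ef p01 Np0 St.
    by apply: filterS => p h; rewrite ge0_fin_numE // (le_lt_trans h) // ltry.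
  apply/cvgrPdist_le => e e0.
  have St : (fock_norm_infty alpha f < (s + e)%:E)%E.
    by rewrite E lte_fin ltrDl.
  have Ms : ((s - e)%:E < fock_norm_infty alpha f)%E.
    by rewrite E lte_fin ltrBlDr ltrDl.
  have hu := upper a0 ef p01 Np0 St.
  have hl := lower a0 ef Ms.
  apply: filterS2 hl hu => p hl hu /=.
  have fin : fock_norm p alpha f \is a fin_num.
    by rewrite ge0_fin_numE // (le_lt_trans hu) ?ltry.
  rewrite -(fineK fin) lee_fin in hl.
  rewrite -(fineK fin) lee_fin in hu.
  rewrite ler_distl; apply/andP; split; lra.
- by apply/cvgeyPge => A; apply: lower => //; rewrite E ltry.
Qed.
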